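(* Let $\psi:[t_0,\infty)\to(0,\infty)$ be continuous and non-increasing, such that $t\mapsto t\psi(t)$ is non-decreasing and $t\psi(t)<1$ for all $t\ge t_0$. Then there exists a unique continuous non-increasing function $r:[s_0,\infty)\to(0,\infty)$, where $s_0=\frac12\log t_0-\frac12\log\psi(t_0)$, such that $s\mapsto s+r(s)$ is non-decreasing and $$\psi(e^{s-r(s)})=e^{-s-r(s)}\quad\text{for all } s\ge s_0.$$ Conversely, given a continuous non-increasing function $r:[s_0,\infty)\to(0,\infty)$ such that $s\mapsto s+r(s)$ is non-decreasing, there exists a unique continuous non-increasing function $\psi:[t_0,\infty)\to(0,\infty)$ with $t_0=e^{s_0-r(s_0)}$ such that $t\mapsto t\psi(t)$ is non-decreasing, $t\psi(t)<1$ for all $t\ge t_0$, and $\psi(e^{s-r(s)})=e^{-s-r(s)}$ for all $s\ge s_0$. Furthermore, for such corresponding $\psi$ and $r$, if $\lim_{t\to\infty}t\psi(t)=1$ (equivalently $\lim_{s\to\infty}r(s)=0$), then the series $$\sum_n\frac{-(1-n\psi(n))\log(1-n\psi(n))}{n}$$ diverges if and only if the series $\sum_n r(n)\log\big(\frac{1}{r(n)}\big)$ diverges. *)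

(* Defs.v *)
From Stdlib Require Import Reals.
From Coquelicot Require Import Coquelicot.
Open Scope R_scope.

Definition cont_from (a : R) (f : R -> R) : Prop :=
  forall x, a <= x -> forall eps, 0 < eps ->
    exists delta, 0 < delta /\
      forall y, a <= y -> Rabs (y - x) < delta -> Rabs (f y - f x) < eps.

Definition nonincr_from (a : R) (f : R -> R) : Prop :=
  forall x y, a <= x -> x <= y -> f y <= f x.

Definition nondecr_from (a : R) (f : R -> R) : Prop :=
  forall x y, a <= x -> x <= y -> f x <= f y.

Definition pos_from (a : R) (f : R -> R) : Prop :=
  forall x, a <= x -> 0 < f x.

Definition psi_adm (t0 : R) (psi : R -> R) : Prop :=
  cont_from t0 psi /\ pos_from t0 psi /\ nonincr_from t0 psi /\
  nondecr_from t0 (fun t => t * psi t) /\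
  (forall t, t0 <= t -> t * psi t < 1).

Definition r_adm (s0 : R) (r : R -> R) : Prop :=
  cont_from s0 r /\ pos_from s0 r /\ nonincr_from s0 r /\
  nondecr_from s0 (fun s => s + r s).

Definition corresp (psi r : R -> R) (s0 : R) : Prop :=
  forall s, s0 <= s -> psi (exp (s - r s)) = exp (- s - r s).

Definition psi_term (psi : R -> R) (n : nat) : R :=
  - (1 - INR n * psi (INR n)) * ln (1 - INR n * psi (INR n)) / INR n.

Definition r_term (r : R -> R) (n : nat) : R :=
  r (INR n) * ln (1 / r (INR n)).

(* Main.v *)
Require Import Defs.
From Stdlib Require Import Reals Lra Lia ZArith.
From Stdlib Require Import IndefiniteDescription.
From Coquelicot Require Import Coquelicot.
Open Scope R_scope.

Lemma cpt_eps (g : R -> R) y : continuity_pt g y ->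
  forall eps, 0 < eps -> exists d, 0 < d /\ forall z, Rabs (z - y) < d -> Rabs (g z - g y) < eps.
Proof.
  intros H eps Heps. destruct (H eps Heps) as [d [Hd Hz]].
  exists d; split; [lra|]. intros z Hzy.
  destruct (Req_dec y z) as [<-|Hne].
  - rewrite Rminus_diag, Rabs_R0; lra.
  - apply (Hz z). split; [split; [exact I| exact Hne] | exact Hzy].
Qed.

Lemma cont_exp_pt x : continuity_pt exp x.
Proof. apply derivable_continuous_pt, derivable_pt_exp. Qed.

Lemma cont_ln_pt x : 0 < x -> continuity_pt ln x.
Proof. intros Hx. apply derivable_continuous_pt. exists (/ x). apply derivable_pt_lim_ln; exact Hx. Qed.

Lemma cont_from_comp_pt a f g : cont_from a f -> (forall x, a <= x -> continuity_pt g (f x)) ->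
  cont_from a (fun x => g (f x)).
Proof.
  intros Hf Hg x Hx eps Heps.
  destruct (cpt_eps g (f x) (Hg x Hx) eps Heps) as [d [Hd Hd']].
  destruct (Hf x Hx d Hd) as [d2 [Hd2 H2]].
  exists d2; split; auto.
Qed.

Lemma cont_from_comp a b h f : cont_from a h -> (forall x, a <= x -> b <= h x) -> cont_from b f ->
  cont_from a (fun x => f (h x)).
Proof.
  intros Hh Hb Hf x Hx eps Heps.
  destruct (Hf (h x) (Hb x Hx) eps Heps) as [d [Hd Hd']].
  destruct (Hh x Hx d Hd) as [d2 [Hd2 H2]].
  exists d2; split; auto.
Qed.

Lemma cont_from_plus a f g : cont_from a f -> cont_from a g -> cont_from a (fun x => f x + g x).
Proof.
  intros Hf Hg x Hx eps Heps.
  destruct (Hf x Hx (eps/2)) as [d1 [Hd1 H1]]; [lra|].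
  destruct (Hg x Hx (eps/2)) as [d2 [Hd2 H2]]; [lra|].
  exists (Rmin d1 d2); split; [apply Rmin_pos; lra|].
  intros y Hy Hyx.
  assert (A1 := H1 y Hy (Rlt_le_trans _ _ _ Hyx (Rmin_l _ _))).
  assert (A2 := H2 y Hy (Rlt_le_trans _ _ _ Hyx (Rmin_r _ _))).
  replace (f y + g y - (f x + g x)) with ((f y - f x) + (g y - g x)) by ring.
  eapply Rle_lt_trans; [apply Rabs_triang|]. lra.
Qed.

Lemma cont_from_scal a c f : cont_from a f -> cont_from a (fun x => c * f x).
Proof.
  intros Hf. apply (cont_from_comp_pt a f (fun y => c * y)); auto.
  intros; reg.
Qed.

Lemma cont_from_id a : cont_from a (fun x => x).
Proof. intros x Hx eps Heps. exists eps; split; auto. Qed.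

Definition sincr_from (a : R) (F : R -> R) : Prop :=
  forall x y, a <= x -> x < y -> F x < F y.

Lemma sincr_le a F x y : sincr_from a F -> a <= x -> a <= y -> F x <= F y -> x <= y.
Proof.
  intros H Hx Hy Hle. destruct (Rle_lt_dec x y) as [h|h]; auto.
  specialize (H y x Hy h). lra.
Qed.

Lemma sincr_inj a F x y : sincr_from a F -> a <= x -> a <= y -> F x = F y -> x = y.
Proof.
  intros H Hx Hy He. apply Rle_antisym; eapply sincr_le; eauto; lra.
Qed.

Lemma surj_from a F y : cont_from a F -> sincr_from a F ->
  (forall M, exists x, a <= x /\ M <= F x) -> F a <= y -> exists x, a <= x /\ F x = y.
Proof.
  intros Hc Hs Hu Hy.
  destruct (Req_dec (F a) y) as [E|Hne]; [exists a; split; [lra|exact E]|].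
  destruct (Hu (y + 1)) as [b [Hb Hby]].
  assert (Hab : a < b).
  { destruct (Rle_lt_dec b a) as [h|h]; auto. assert (b = a) by lra. subst. lra. }
  set (G := fun x => F (Rmax a x) - y).
  assert (HG : forall x, continuity_pt G x).
  { intros x. unfold G. intros eps Heps.
    destruct (Hc (Rmax a x) (Rmax_l _ _) eps Heps) as [d [Hd Hd']].
    exists d; split; [lra|]. intros z [_ Hz]. simpl in *. unfold R_dist in *.
    replace (F (Rmax a z) - y - (F (Rmax a x) - y)) with (F (Rmax a z) - F (Rmax a x)) by ring.
    apply Hd'; [apply Rmax_l|].
    unfold Rmax; destruct (Rle_dec a z); destruct (Rle_dec a x);
      apply Rabs_def1; apply Rabs_def2 in Hz; lra. }
  destruct (Ranalysis5.IVT_interv G a b (fun z _ => HG z) Hab) as [z [Hz1 Hz2]].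
  - unfold G. rewrite Rmax_left by lra. lra.
  - unfold G. rewrite Rmax_right by lra. lra.
  - exists z; split; [lra|]. unfold G in Hz2. rewrite Rmax_right in Hz2 by lra. lra.
Qed.

Lemma cont_from_opp a f : cont_from a f -> cont_from a (fun x => - f x).
Proof.
  intros Hf. apply (cont_from_comp_pt a f (fun y => - y)); auto. intros; reg.
Qed.

Lemma cont_from_minus a f g : cont_from a f -> cont_from a g -> cont_from a (fun x => f x - g x).
Proof. intros. apply (cont_from_plus a f (fun x => - g x)); auto. apply cont_from_opp; auto. Qed.

Lemma cont_from_mono a b f : a <= b -> cont_from a f -> cont_from b f.
Proof.
  intros Hab Hf x Hx eps Heps. destruct (Hf x ltac:(lra) eps Heps) as [d [Hd H]].
  exists d; split; auto. intros y Hy. apply H; lra.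
Qed.
Lemma inv_from a F : cont_from a F -> sincr_from a F ->
  (forall M, exists x, a <= x /\ M <= F x) ->
  exists G, (forall y, F a <= y -> a <= G y /\ F (G y) = y) /\
            cont_from (F a) G /\ nondecr_from (F a) G.
Proof.
  intros Hc Hs Hu.
  assert (H : forall y, exists x, F a <= y -> a <= x /\ F x = y).
  { intros y. destruct (Rle_dec (F a) y) as [h|h].
    - destruct (surj_from a F y Hc Hs Hu h) as [x Hx]. exists x; auto.
    - exists a. intros; lra. }
  set (G := fun y => proj1_sig (constructive_indefinite_description _ (H y))).
  assert (HG : forall y, F a <= y -> a <= G y /\ F (G y) = y).
  { intros y Hy. unfold G. destruct (constructive_indefinite_description _ (H y)) as [x Hx]. simpl; auto. }
  exists G; split; [exact HG|].
  assert (Hmono : nondecr_from (F a) G).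
  { intros x y Hx Hxy. destruct (HG x Hx) as [A1 A2]. destruct (HG y ltac:(lra)) as [B1 B2].
    apply (sincr_le a F); auto. lra. }
  split; [|exact Hmono].
  intros y Hy eps Heps.
  destruct (HG y Hy) as [Ha Hx]. set (x := G y) in *.
  assert (Hp : F (x + eps/2) > y) by (rewrite <- Hx; apply Hs; lra).
  destruct (Rle_lt_dec a (x - eps/2)) as [hm|hm].
  - assert (Hm : F (x - eps/2) < y) by (rewrite <- Hx; apply Hs; lra).
    exists (Rmin (F (x + eps/2) - y) (y - F (x - eps/2))).
    split; [apply Rmin_pos; lra|].
    intros z Hz Hzy. assert (Z1 := Rmin_l (F (x + eps/2) - y) (y - F (x - eps/2))).
    assert (Z2 := Rmin_r (F (x + eps/2) - y) (y - F (x - eps/2))).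
    apply Rabs_def2 in Hzy. destruct (HG z Hz) as [C1 C2].
    assert (G z < x + eps/2).
    { destruct (Rlt_le_dec (G z) (x + eps/2)) as [h|h]; auto.
      assert (F (x + eps/2) <= F (G z)).
      { destruct (Req_dec (x + eps/2) (G z)) as [e|e]; [rewrite e; lra|]. left; apply Hs; lra. }
      lra. }
    assert (x - eps/2 < G z).
    { destruct (Rlt_le_dec (x - eps/2) (G z)) as [h|h]; auto.
      assert (F (G z) <= F (x - eps/2)).
      { destruct (Req_dec (x - eps/2) (G z)) as [e|e]; [rewrite e; lra|]. left; apply Hs; lra. }
      lra. }
    apply Rabs_def1; lra.
  - exists (F (x + eps/2) - y). split; [lra|].
    intros z Hz Hzy. apply Rabs_def2 in Hzy. destruct (HG z Hz) as [C1 C2].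
    assert (G z < x + eps/2).
    { destruct (Rlt_le_dec (G z) (x + eps/2)) as [h|h]; auto.
      assert (F (x + eps/2) <= F (G z)).
      { destruct (Req_dec (x + eps/2) (G z)) as [e|e]; [rewrite e; lra|]. left; apply Hs; lra. }
      lra. }
    apply Rabs_def1; lra.
Qed.
Lemma ln_neg x : 0 < x -> x < 1 -> ln x < 0.
Proof. intros. rewrite <- ln_1. apply ln_increasing; lra. Qed.

Lemma part1 : forall (t0 : R) (psi : R -> R),
     0 < t0 -> psi_adm t0 psi ->
     let s0 := / 2 * ln t0 - / 2 * ln (psi t0) in
     exists r : R -> R,
       r_adm s0 r /\ corresp psi r s0 /\
       (forall r' : R -> R, r_adm s0 r' -> corresp psi r' s0 ->
          forall s, s0 <= s -> r' s = r s).
Proof.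
  intros t0 psi Ht0 [Pc [Pp [Pn [Pm Pl]]]] s0.
  set (F := fun t => / 2 * ln t - / 2 * ln (psi t)).
  assert (Fc : cont_from t0 F).
  { unfold F. apply cont_from_minus; apply cont_from_scal.
    - apply (cont_from_comp_pt t0 (fun x => x)); [apply cont_from_id|]. intros; apply cont_ln_pt; lra.
    - apply cont_from_comp_pt; auto. intros; apply cont_ln_pt; auto. }
  assert (Fs : sincr_from t0 F).
  { intros x y Hx Hxy. unfold F.
    assert (ln x < ln y) by (apply ln_increasing; lra).
    assert (ln (psi y) <= ln (psi x)) by (apply ln_le; [apply Pp; lra| apply Pn; lra]).
    lra. }
  assert (Fu : forall M, exists x, t0 <= x /\ M <= F x).
  { intros M. exists (Rmax t0 (exp (2 * M + ln (psi t0)))). split; [apply Rmax_l|].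
    unfold F. set (x := Rmax t0 _).
    assert (Hx : t0 <= x) by apply Rmax_l.
    assert (ln (exp (2 * M + ln (psi t0))) <= ln x) by (apply ln_le; [apply exp_pos| apply Rmax_r]).
    rewrite ln_exp in H.
    assert (ln (psi x) <= ln (psi t0)) by (apply ln_le; [apply Pp; lra| apply Pn; lra]).
    lra. }
  destruct (inv_from t0 F Fc Fs Fu) as [G [HG [Gc Gm]]].
  change (F t0) with s0 in HG, Gc, Gm.
  assert (Gpos : forall s, s0 <= s -> 0 < G s) by (intros s Hs; destruct (HG s Hs); lra).
  assert (Gpsi : forall s, s0 <= s -> psi (G s) = exp (ln (G s) - 2 * s)).
  { intros s Hs. destruct (HG s Hs) as [A1 A2]. unfold F in A2.
    assert (Hp : 0 < psi (G s)) by (apply Pp; lra).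
    rewrite <- (exp_ln _ Hp). f_equal. lra. }
  exists (fun s => s - ln (G s)).
  assert (Hr : forall s, s0 <= s -> s - ln (G s) = - / 2 * ln (G s * psi (G s))).
  { intros s Hs. destruct (HG s Hs) as [A1 A2]. unfold F in A2.
    rewrite ln_mult; [lra| apply Gpos; auto | apply Pp; lra]. }
  split; [repeat split|split].
  - apply cont_from_minus; [apply cont_from_id|].
    apply cont_from_comp_pt; auto. intros; apply cont_ln_pt; auto.
  - intros s Hs. rewrite Hr by auto. destruct (HG s Hs) as [A1 A2].
    assert (0 < G s * psi (G s)) by (apply Rmult_lt_0_compat; [lra| apply Pp; lra]).
    assert (ln (G s * psi (G s)) < 0) by (apply ln_neg; auto; apply Pl; lra). lra.
  - intros x y Hx Hxy. rewrite !Hr by lra.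
    destruct (HG x Hx) as [A1 A2]. 
    assert (0 < G x * psi (G x)) by (apply Rmult_lt_0_compat; [lra| apply Pp; lra]).
    assert (G x <= G y) by (apply Gm; auto).
    assert (ln (G x * psi (G x)) <= ln (G y * psi (G y))) by (apply ln_le; auto; apply Pm; lra).
    lra.
  - intros x y Hx Hxy. simpl.
    destruct (HG x Hx) as [A1 A2]. destruct (HG y ltac:(lra)) as [B1 B2]. unfold F in A2, B2.
    assert (G x <= G y) by (apply Gm; auto).
    assert (ln (psi (G y)) <= ln (psi (G x))) by (apply ln_le; [apply Pp; lra| apply Pn; lra]).
    lra.
  - intros s Hs. replace (s - (s - ln (G s))) with (ln (G s)) by ring.
    rewrite exp_ln by auto. rewrite Gpsi by auto. f_equal. ring.
  - intros r' [Rc [Rp [Rn Rm]]] Hcor s Hs.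
    assert (Hge : forall s, s0 <= s -> ln t0 <= s - r' s).
    { intros s1 Hs1. destruct (Rle_lt_dec (ln t0) (s1 - r' s1)) as [h|h]; auto. exfalso.
      set (D := fun s => s - r' s).
      assert (Dc : cont_from s1 D).
      { unfold D. apply cont_from_minus; [apply cont_from_id|].
        apply (cont_from_mono s0); auto. }
      assert (Ds : sincr_from s1 D).
      { intros x y Hx Hxy. unfold D. assert (r' y <= r' x) by (apply Rn; lra). lra. }
      assert (Du : forall M, exists x, s1 <= x /\ M <= D x).
      { intros M. exists (Rmax s1 (M + r' s0)). split; [apply Rmax_l|]. unfold D.
        assert (r' (Rmax s1 (M + r' s0)) <= r' s0) by (apply Rn; [lra|]; eapply Rle_trans; [exact Hs1| apply Rmax_l]).
        assert (M + r' s0 <= Rmax s1 (M + r' s0)) by apply Rmax_r. lra. }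
      destruct (surj_from s1 D (ln t0) Dc Ds Du) as [s2 [Hs2 Hd2]]; [unfold D; lra|].
      unfold D in Hd2.
      assert (Hs12 : s1 <> s2) by (intro e; subst; lra).
      specialize (Hcor s2 ltac:(lra)). rewrite Hd2, exp_ln in Hcor by auto.
      assert (ln (psi t0) = - s2 - r' s2) by (rewrite Hcor, ln_exp; auto).
      unfold s0 in Hs1. lra. }
    assert (Ht : t0 <= exp (s - r' s)).
    { rewrite <- (exp_ln t0 Ht0). destruct (Req_dec (ln t0) (s - r' s)) as [e|e]; [rewrite e; lra|].
      left; apply exp_increasing. specialize (Hge s Hs). lra. }
    assert (E : exp (s - r' s) = G s).
    { apply (sincr_inj t0 F); auto; [apply HG; auto|].
      destruct (HG s Hs) as [_ ->]. unfold F. rewrite Hcor by auto. rewrite !ln_exp. lra. }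
    rewrite <- E, ln_exp. ring.
Qed.
Lemma T_props s0 r : r_adm s0 r ->
  cont_from s0 (fun s => exp (s - r s)) /\ sincr_from s0 (fun s => exp (s - r s)) /\
  (forall M, exists x, s0 <= x /\ M <= exp (x - r x)).
Proof.
  intros [Rc [Rp [Rn Rm]]]. split; [|split].
  - apply cont_from_comp_pt; [apply cont_from_minus; [apply cont_from_id| auto]|].
    intros; apply cont_exp_pt.
  - intros x y Hx Hxy. apply exp_increasing. assert (r y <= r x) by (apply Rn; lra). lra.
  - intros M. exists (Rmax s0 (M + r s0)). split; [apply Rmax_l|].
    assert (r (Rmax s0 (M + r s0)) <= r s0) by (apply Rn; [lra| apply Rmax_l]).
    assert (M + r s0 <= Rmax s0 (M + r s0)) by apply Rmax_r.
    assert (H2 := exp_ineq1_le (Rmax s0 (M + r s0) - r (Rmax s0 (M + r s0)))). lra.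
Qed.

Lemma part2 : forall (s0 : R) (r : R -> R),
     r_adm s0 r ->
     let t0 := exp (s0 - r s0) in
     exists psi : R -> R,
       psi_adm t0 psi /\ corresp psi r s0 /\
       (forall psi' : R -> R, psi_adm t0 psi' -> corresp psi' r s0 ->
          forall t, t0 <= t -> psi' t = psi t).
Proof.
  intros s0 r Hr t0.
  destruct (T_props s0 r Hr) as [Tc [Ts Tu]].
  destruct Hr as [Rc [Rp [Rn Rm]]].
  destruct (inv_from s0 _ Tc Ts Tu) as [S [HS [Sc Sm]]].
  change (exp (s0 - r s0)) with t0 in HS, Sc, Sm.
  assert (Sr : cont_from t0 (fun t => r (S t))).
  { apply (cont_from_comp _ s0); auto. intros; apply HS; auto. }
  exists (fun t => exp (- S t - r (S t))).
  assert (HSinv : forall s, s0 <= s -> S (exp (s - r s)) = s).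
  { intros s Hs. assert (t0 <= exp (s - r s)).
    { unfold t0. destruct (Req_dec s0 s) as [e|e]; [subst; lra|]. left; apply Ts; lra. }
    apply (sincr_inj s0 (fun s => exp (s - r s))); auto; [apply HS; auto|].
    apply HS; auto. }
  split; [repeat split|split].
  - apply cont_from_comp_pt; [|intros; apply cont_exp_pt].
    apply cont_from_minus; auto. apply cont_from_opp; auto.
  - intros t Ht. apply exp_pos.
  - intros x y Hx Hxy. 
    destruct (HS x Hx). destruct (HS y ltac:(lra)).
    assert (S x <= S y) by (apply Sm; auto).
    assert (S x + r (S x) <= S y + r (S y)) by (apply Rm; auto).
    destruct (Req_dec (- S y - r (S y)) (- S x - r (S x))) as [e|e]; [rewrite e; lra|].
    left; apply exp_increasing; lra.
  - intros x y Hx Hxy. simpl.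
    destruct (HS x Hx) as [A1 A2]. destruct (HS y ltac:(lra)) as [B1 B2].
    rewrite <- A2 at 1. rewrite <- B2 at 1. rewrite <- !exp_plus.
    assert (S x <= S y) by (apply Sm; auto).
    assert (r (S y) <= r (S x)) by (apply Rn; auto).
    destruct (Req_dec (S x - r (S x) + (- S x - r (S x))) (S y - r (S y) + (- S y - r (S y)))) as [e|e];
      [rewrite e; lra|].
    left; apply exp_increasing; lra.
  - intros t Ht. destruct (HS t Ht) as [A1 A2]. rewrite <- A2 at 1. rewrite <- exp_plus.
    rewrite <- exp_0. apply exp_increasing. assert (0 < r (S t)) by (apply Rp; auto). lra.
  - intros s Hs. simpl. rewrite HSinv by auto. reflexivity.
  - intros psi' _ Hc t Ht. destruct (HS t Ht) as [A1 A2].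
    rewrite <- A2 at 1. apply Hc; auto.
Qed.
Fixpoint ps (a : nat -> R) (N : nat) : R :=
  match N with O => 0 | S N => ps a N + a N end.

Lemma ps_sum_n a N : sum_n a N = ps a (S N).
Proof.
  induction N.
  - rewrite sum_O. simpl. rewrite Rplus_0_l. reflexivity.
  - rewrite sum_Sn, IHN. simpl. reflexivity.
Qed.

Lemma ps_shift a M k : ps (fun j => a (M + j)%nat) k = ps a (M + k) - ps a M.
Proof.
  induction k.
  - rewrite Nat.add_0_r. simpl. ring.
  - rewrite Nat.add_succ_r. simpl. rewrite IHk. ring.
Qed.

Lemma ps_lower a p m : forall j, (forall n, (p <= n < p + j)%nat -> m <= a n) ->
  INR j * m <= ps a (p + j) - ps a p.
Proof.
  induction j; intros H.
  - rewrite Nat.add_0_r. simpl. lra.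
  - rewrite Nat.add_succ_r. simpl ps. rewrite S_INR.
    assert (A := IHj (fun n Hn => H n ltac:(lia))).
    assert (m <= a (p + j)%nat) by (apply H; lia). lra.
Qed.

Lemma ps_upper a p m : forall j, (forall n, (p <= n < p + j)%nat -> a n <= m) ->
  ps a (p + j) - ps a p <= INR j * m.
Proof.
  induction j; intros H.
  - rewrite Nat.add_0_r. simpl. lra.
  - rewrite Nat.add_succ_r. simpl ps. rewrite S_INR.
    assert (A := IHj (fun n Hn => H n ltac:(lia))).
    assert (a (p + j)%nat <= m) by (apply H; lia). lra.
Qed.

Lemma ps_mono a p q : (p <= q)%nat -> (forall n, (p <= n)%nat -> 0 <= a n) -> ps a p <= ps a q.
Proof.
  intros Hpq H. replace q with (p + (q - p))%nat by lia.
  assert (A := ps_lower a p 0 (q - p) (fun n Hn => H n ltac:(lia))). lra.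
Qed.

Lemma series_crit (a : nat -> R) : (exists N0, forall n, (N0 <= n)%nat -> 0 <= a n) ->
  (ex_series a <-> exists N1 B, forall N, (N1 <= N)%nat -> ps a N <= B).
Proof.
  intros [N0 H0]. split.
  - intros [l Hl]. assert (Hl' : is_lim_seq (sum_n a) l) by exact Hl.
    apply is_lim_seq_spec in Hl'. destruct (Hl' (mkposreal 1 Rlt_0_1)) as [N HN].
    exists (S N), (l + 1). intros M HM. destruct M as [|k]; [lia|].
    rewrite <- ps_sum_n. specialize (HN k ltac:(lia)). simpl in HN.
    apply Rabs_def2 in HN. lra.
  - intros [N1 [B HB]]. set (M := Nat.max N0 N1).
    apply (ex_series_incr_n a M).
    assert (Hf : ex_finite_lim_seq (sum_n (fun k => a (M + k)%nat))).
    { apply (ex_finite_lim_seq_incr _ (B - ps a M)).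
      - intros n. rewrite !ps_sum_n. simpl ps. assert (0 <= a (M + S n)%nat) by (apply H0; lia).
        lra.
      - intros n. rewrite ps_sum_n, ps_shift. specialize (HB (M + S n)%nat ltac:(lia)). lra. }
    destruct Hf as [l Hl]. exists l. exact Hl.
Qed.
Lemma nat_up x : 0 <= x -> x < INR (Z.to_nat (up x)) <= x + 1.
Proof.
  intros Hx. destruct (archimed x) as [A1 A2].
  assert (Hz : (0 <= up x)%Z) by (apply le_IZR; lra).
  rewrite INR_IZR_INZ, Z2Nat.id by exact Hz. lra.
Qed.

Lemma nat_above x : exists n : nat, x < INR n.
Proof.
  destruct (Rle_lt_dec 0 x) as [h|h].
  - exists (Z.to_nat (up x)). apply nat_up; auto.
  - exists 0%nat. simpl. lra.
Qed.

Definition phi (x : R) : R := - x * ln x.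

Lemma phi_nonneg x : 0 < x -> x <= 1 -> 0 <= phi x.
Proof.
  intros. unfold phi. assert (ln x <= 0) by (rewrite <- ln_1; apply ln_le; lra). nra.
Qed.

Lemma ln_le_xm1 k : 0 < k -> ln k <= k - 1.
Proof.
  intros Hk. assert (H := exp_ineq1_le (k - 1)).
  rewrite <- (ln_exp (k - 1)). apply ln_le; lra.
Qed.

Lemma phi_mono x y : 0 < x -> x <= y -> y <= exp (-1) -> phi x <= phi y.
Proof.
  intros Hx Hxy Hy. unfold phi.
  set (k := y / x).
  assert (Hk1 : 1 <= k) by (unfold k; apply (Rmult_le_reg_r x); [lra|]; field_simplify; lra).
  assert (Hyk : y = x * k) by (unfold k; field; lra).
  assert (Hlny : ln y = ln x + ln k) by (rewrite Hyk; apply ln_mult; lra).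
  assert (Hlk0 : 0 <= ln k) by (rewrite <- ln_1; apply ln_le; lra).
  assert (Hlk : ln k <= k - 1) by (apply ln_le_xm1; lra).
  assert (Hly : ln y <= -1) by (rewrite <- (ln_exp (-1)); apply ln_le; lra).
  set (L := - ln x). set (lk := ln k) in *.
  assert (HL : 1 + lk <= L) by (unfold L; lra).
  assert ((k - 1) * L >= (k - 1) * (1 + lk)) by nra.
  assert ((k - 1) * L >= k * lk) by nra.
  rewrite Hlny, Hyk. replace (ln x) with (- L) by (unfold L; ring).
  nra.
Qed.

Lemma exp_m1_ge : / 4 <= exp (-1).
Proof.
  rewrite <- (Rmult_1_l (exp (-1))). 
  assert (Hm : exp 1 * exp (-1) = 1) by (rewrite <- exp_plus; replace (1 + -1) with 0 by ring; apply exp_0).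
  assert (H3 := exp_le_3). assert (He : exp 0 < exp 1) by (apply exp_increasing; lra). rewrite exp_0 in He.
  assert (0 < exp (-1)) by apply exp_pos. nra.
Qed.

Lemma q_bounds rho : 0 < rho -> rho <= / 8 ->
  phi rho <= phi (1 - exp (-2 * rho)) <= 2 * phi rho.
Proof.
  intros H1 H2. assert (E := exp_m1_ge).
  assert (U : 1 - exp (-2 * rho) <= 2 * rho) by (assert (H := exp_ineq1_le (-2 * rho)); lra).
  assert (L : rho <= 1 - exp (-2 * rho)).
  { assert (H := exp_ineq1_le (2 * rho)).
    assert (exp (2 * rho) * exp (-2 * rho) = 1) by (rewrite <- exp_plus; replace (2 * rho + -2 * rho) with 0 by ring; apply exp_0).
    assert (0 < exp (-2 * rho)) by apply exp_pos. nra. }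
  split.
  - apply phi_mono; lra.
  - apply Rle_trans with (phi (2 * rho)); [apply phi_mono; lra|].
    unfold phi. rewrite ln_mult by lra.
    assert (0 < ln 2) by (rewrite <- ln_1; apply ln_increasing; lra). nra.
Qed.

Lemma r_term_phi r k : 0 < r (INR k) -> r_term r k = phi (r (INR k)).
Proof.
  intros H. unfold r_term, phi. unfold Rdiv. rewrite Rmult_1_l, ln_Rinv by auto. ring.
Qed.

Lemma psi_term_phi psi n : psi_term psi n = phi (1 - INR n * psi (INR n)) / INR n.
Proof. unfold psi_term, phi. reflexivity. Qed.

Lemma psi_term_nonneg t0 psi n : 0 < t0 -> psi_adm t0 psi -> t0 <= INR n -> 0 <= psi_term psi n.
Proof.
  intros Ht0 [_ [Pp [_ [_ Pl]]]] Hn. rewrite psi_term_phi.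
  assert (0 < psi (INR n)) by (apply Pp; auto).
  assert (INR n * psi (INR n) < 1) by (apply Pl; auto).
  assert (0 < INR n * psi (INR n)) by (apply Rmult_lt_0_compat; lra).
  unfold Rdiv. apply Rmult_le_pos; [apply phi_nonneg; lra|]. left; apply Rinv_0_lt_compat; lra.
Qed.
Lemma T_surj t0 s0 r : r_adm s0 r -> t0 = exp (s0 - r s0) ->
  forall t, t0 <= t -> exists s, s0 <= s /\ exp (s - r s) = t.
Proof.
  intros Hr Ht0 t Ht. destruct (T_props s0 r Hr) as [Tc [Ts Tu]].
  apply (surj_from s0 (fun s => exp (s - r s))); auto. simpl; lra.
Qed.

Lemma T_psi psi r s0 : corresp psi r s0 -> forall s, s0 <= s ->
  exp (s - r s) * psi (exp (s - r s)) = exp (-2 * r s).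
Proof.
  intros Hc s Hs. rewrite Hc by auto. rewrite <- exp_plus. f_equal. ring.
Qed.

Lemma lim_equiv t0 s0 psi r : 0 < t0 -> psi_adm t0 psi -> r_adm s0 r ->
  t0 = exp (s0 - r s0) -> corresp psi r s0 ->
  (is_lim (fun t => t * psi t) p_infty 1 <-> is_lim r p_infty 0).
Proof.
  intros Ht0 Hpsi Hr Ht0e Hc.
  assert (HrE := Hr). destruct Hr as [Rc [Rp [Rn Rm]]].
  split; intros H; apply is_lim_spec in H; apply is_lim_spec; intros eps; simpl in *;
  assert (Pe := cond_pos eps).
  - assert (Heta : 0 < 1 - exp (-2 * eps)).
    { assert (exp (-2 * eps) < exp 0) by (apply exp_increasing; lra).
      rewrite exp_0 in H0. lra. }
    destruct (H (mkposreal _ Heta)) as [M HM]. simpl in HM.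
    exists (Rmax s0 (M + r s0)). intros s Hs.
    assert (Hs0 : s0 <= s) by (assert (X := Rmax_l s0 (M + r s0)); lra).
    assert (HsM : M + r s0 <= s) by (assert (X := Rmax_r s0 (M + r s0)); lra).
    assert (r s <= r s0) by (apply Rn; lra).
    assert (A := exp_ineq1_le (s - r s)).
    specialize (HM (exp (s - r s)) ltac:(lra)).
    rewrite (T_psi psi r s0 Hc s Hs0) in HM.
    apply Rabs_def2 in HM. destruct HM as [_ HM].
    assert (exp (-2 * eps) < exp (-2 * r s)) by lra.
    apply exp_lt_inv in H1. assert (0 < r s) by (apply Rp; auto).
    rewrite Rminus_0_r. rewrite Rabs_right by lra. lra.
  - assert (Heps2 : 0 < eps / 2) by lra.
    destruct (H (mkposreal _ Heps2)) as [M HM]. simpl in HM.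
    exists (Rmax t0 (exp M)). intros t Ht.
    assert (Ht0' : t0 <= t) by (assert (X := Rmax_l t0 (exp M)); lra).
    assert (HtM : exp M < t) by (assert (X := Rmax_r t0 (exp M)); lra).
    destruct (T_surj t0 s0 r HrE Ht0e t Ht0') as [s [Hs Hst]].
    rewrite <- Hst. rewrite (T_psi psi r s0 Hc s Hs).
    assert (M < s - r s) by (apply exp_lt_inv; lra).
    assert (0 < r s) by (apply Rp; auto).
    specialize (HM s ltac:(lra)). rewrite Rminus_0_r in HM. apply Rabs_def2 in HM.
    assert (exp (-2 * r s) < exp 0) by (apply exp_increasing; lra). rewrite exp_0 in H2.
    assert (B := exp_ineq1_le (-2 * r s)).
    apply Rabs_def1; lra.
Qed.
Lemma series_equiv t0 s0 psi r : 0 < t0 -> psi_adm t0 psi -> r_adm s0 r ->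
  t0 = exp (s0 - r s0) -> corresp psi r s0 -> is_lim r p_infty 0 ->
  (ex_series (psi_term psi) <-> ex_series (r_term r)).
Proof.
  intros Ht0 Hpsi Hr Ht0e Hc Hlim.
  assert (HrE := Hr). destruct Hr as [Rc [Rp [Rn Rm]]].
  destruct (T_props s0 r HrE) as [Tc [Ts Tu]].
  apply is_lim_spec in Hlim. 
  assert (P8 : 0 < / 8) by lra.
  destruct (Hlim (mkposreal _ P8)) as [M HM]. simpl in HM.
  destruct (nat_above (Rmax (Rmax M s0) 10)) as [K0 HK0].
  assert (X1 := Rmax_l (Rmax M s0) 10). assert (X2 := Rmax_r (Rmax M s0) 10).
  assert (X3 := Rmax_l M s0). assert (X4 := Rmax_r M s0).
  assert (Hr8 : forall x, INR K0 <= x -> 0 < r x <= / 8).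
  { intros x Hx. specialize (HM x ltac:(lra)). rewrite Rminus_0_r in HM. apply Rabs_def2 in HM.
    assert (0 < r x) by (apply Rp; lra). lra. }
  assert (HT : forall x, INR K0 <= x -> x <= exp (x - r x) /\ 10 <= exp (x - r x) /\ t0 <= exp (x - r x)).
  { intros x Hx. assert (A := exp_ineq1_le (x - r x)). specialize (Hr8 x Hx).
    split; [lra| split; [lra|]]. rewrite Ht0e.
    destruct (Req_dec s0 x) as [e|e]; [rewrite e; lra|]. left; apply Ts; lra. }
  assert (HT2 : forall x, INR K0 <= x ->
     2 * exp (x - r x) <= exp ((x + 1) - r (x + 1)) <= 9 * exp (x - r x)).
  { intros x Hx.
    replace (exp ((x + 1) - r (x + 1))) with (exp (1 + r x - r (x + 1)) * exp (x - r x))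
      by (rewrite <- exp_plus; f_equal; ring).
    assert (r (x + 1) <= r x) by (apply Rn; lra).
    assert (0 < r (x + 1)) by (apply Rp; lra).
    destruct (Hr8 x Hx).
    assert (E1 := exp_ineq1_le 1).
    assert (exp 1 <= exp (1 + r x - r (x + 1))).
    { destruct (Req_dec 1 (1 + r x - r (x + 1))) as [e|e]; [rewrite <- e; lra|]. left; apply exp_increasing; lra. }
    assert (exp (1 + r x - r (x + 1)) <= exp 2).
    { left; apply exp_increasing; lra. }
    assert (exp 2 <= 9).
    { replace 2 with (1 + 1) by ring. rewrite exp_plus. assert (E3 := exp_le_3).
      assert (0 < exp 1) by apply exp_pos. nra. }
    assert (0 < exp (x - r x)) by apply exp_pos.
    split; nra. }
  set (m := fun k : nat => Z.to_nat (up (exp (INR k - r (INR k))))).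
  assert (HK : forall k, (K0 <= k)%nat -> INR K0 <= INR k) by (intros; apply le_INR; auto).
  assert (Hm : forall k, (K0 <= k)%nat ->
     exp (INR k - r (INR k)) < INR (m k) <= exp (INR k - r (INR k)) + 1).
  { intros k Hk. unfold m. apply nat_up. left; apply exp_pos. }
  assert (Hmk : forall k, (K0 <= k)%nat -> (k < m k)%nat).
  { intros k Hk. apply INR_lt. destruct (Hm k Hk). destruct (HT (INR k) (HK k Hk)). lra. }
  assert (HmS : forall k, (K0 <= k)%nat -> INR (m k) <= exp (INR k - r (INR k)) + 1 /\
       exp (INR (S k) - r (INR (S k))) < INR (m (S k)) /\
       INR (m (S k)) <= exp (INR (S k) - r (INR (S k))) + 1 /\
       2 * exp (INR k - r (INR k)) <= exp (INR (S k) - r (INR (S k))) <= 9 * exp (INR k - r (INR k))).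
  { intros k Hk. destruct (Hm k Hk). destruct (Hm (S k) ltac:(lia)).
    rewrite S_INR. rewrite S_INR in H1, H2. specialize (HT2 (INR k) (HK k Hk)). lra. }
  assert (Hmm : forall k, (K0 <= k)%nat -> (m k < m (S k))%nat).
  { intros k Hk. apply INR_lt. destruct (HmS k Hk) as [A [B [C D]]]. destruct (HT (INR k) (HK k Hk)). lra. }
  assert (Hterm : forall k n, (K0 <= k)%nat -> (m k <= n < m (S k))%nat ->
     phi (r (INR (S k))) * / INR (m (S k)) <= psi_term psi n <= 2 * phi (r (INR k)) * / INR (m k)).
  { intros k n Hk Hn. assert (HKk := HK k Hk).
    destruct (HmS k Hk) as [A [B [C D]]]. destruct (Hm k Hk) as [A0 _].
    destruct (HT (INR k) (HK k Hk)) as [T1 [T2 T3]].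
    assert (N1 : INR (m k) <= INR n) by (apply le_INR; lia).
    assert (N2 : INR n + 1 <= INR (m (S k))) by (rewrite <- S_INR; apply le_INR; lia).
    assert (Hn0 : t0 <= INR n) by lra.
    destruct (T_surj t0 s0 r HrE Ht0e (INR n) Hn0) as [sg [Hsg Hsgn]].
    assert (Hks : s0 <= INR k) by lra.
    assert (S1 : INR k <= sg).
    { apply (sincr_le s0 (fun s => exp (s - r s))); auto. simpl. lra. }
    assert (S2 : sg <= INR (S k)).
    { apply (sincr_le s0 (fun s => exp (s - r s))); [auto | lra | rewrite S_INR; lra | cbv beta; lra]. }
    assert (R1 : r (INR (S k)) <= r sg) by (apply Rn; lra).
    assert (R2 : r sg <= r (INR k)) by (apply Rn; lra).
    destruct (Hr8 sg ltac:(lra)) as [R3 R4].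
    destruct (Hr8 (INR k) ltac:(lra)) as [R5 R6].
    destruct (Hr8 (INR (S k)) ltac:(rewrite S_INR; lra)) as [R7 R8].
    assert (E := exp_m1_ge).
    assert (Q := q_bounds (r sg) R3 R4).
    assert (F1 : phi (r (INR (S k))) <= phi (r sg)) by (apply phi_mono; lra).
    assert (F2 : phi (r sg) <= phi (r (INR k))) by (apply phi_mono; lra).
    assert (F0 : 0 <= phi (r (INR (S k)))) by (apply phi_nonneg; lra).
    rewrite psi_term_phi. rewrite <- Hsgn. rewrite (T_psi psi r s0 Hc sg Hsg). rewrite Hsgn.
    unfold Rdiv.
    assert (U1 : / INR (m (S k)) <= / INR n) by (apply Rinv_le_contravar; lra).
    assert (U2 : / INR n <= / INR (m k)) by (apply Rinv_le_contravar; lra).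
    assert (U0 : 0 < / INR (m (S k))) by (apply Rinv_0_lt_compat; lra).
    split; nra. }
  set (a := psi_term psi). set (b := r_term r).
  assert (Hb : forall k, (K0 <= k)%nat -> b k = phi (r (INR k)) /\ 0 <= phi (r (INR k))).
  { intros k Hk. destruct (Hr8 (INR k) (HK k Hk)). split.
    - apply r_term_phi; auto.
    - apply phi_nonneg; lra. }
  assert (Ha : forall n, (m K0 <= n)%nat -> 0 <= a n).
  { intros n Hn. apply (psi_term_nonneg t0); auto.
    destruct (Hm K0 (le_n _)). destruct (HT (INR K0) (Rle_refl _)) as [_ [_ T3]].
    assert (INR (m K0) <= INR n) by (apply le_INR; auto). lra. }
  assert (BL : forall k, (K0 <= k)%nat -> phi (r (INR (S k))) / 4 <= ps a (m (S k)) - ps a (m k)).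
  { intros k Hk. 
    assert (L := ps_lower a (m k) (phi (r (INR (S k))) * / INR (m (S k))) (m (S k) - m k)).
    replace (m k + (m (S k) - m k))%nat with (m (S k)) in L by (specialize (Hmm k Hk); lia).
    assert (L' := L (fun n Hn => proj1 (Hterm k n Hk Hn))).
    rewrite minus_INR in L' by (specialize (Hmm k Hk); lia).
    destruct (HmS k Hk) as [A [B [C D]]]. destruct (Hm k Hk) as [A0 _].
    destruct (HT (INR k) (HK k Hk)) as [T1 [T2 T3]].
    destruct (Hb (S k) ltac:(lia)) as [_ P0].
    set (P := phi (r (INR (S k)))) in *. set (X := INR (m (S k))) in *. set (Y := INR (m k)) in *.
    assert (HX : X * / X = 1) by (apply Rinv_r; lra).
    assert (0 < / X) by (apply Rinv_0_lt_compat; lra).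
    assert (Y <= 3 / 4 * X) by lra.
    assert (Y * / X <= 3 / 4) by nra.
    nra. }
  assert (BU : forall k, (K0 <= k)%nat -> ps a (m (S k)) - ps a (m k) <= 18 * phi (r (INR k))).
  { intros k Hk. 
    assert (L := ps_upper a (m k) (2 * phi (r (INR k)) * / INR (m k)) (m (S k) - m k)).
    replace (m k + (m (S k) - m k))%nat with (m (S k)) in L by (specialize (Hmm k Hk); lia).
    assert (L' := L (fun n Hn => proj2 (Hterm k n Hk Hn))).
    rewrite minus_INR in L' by (specialize (Hmm k Hk); lia).
    destruct (HmS k Hk) as [A [B [C D]]]. destruct (Hm k Hk) as [A0 _].
    destruct (HT (INR k) (HK k Hk)) as [T1 [T2 T3]].
    destruct (Hb k Hk) as [_ P0].
    set (P := phi (r (INR k))) in *. set (X := INR (m (S k))) in *. set (Y := INR (m k)) in *.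
    assert (HY : Y * / Y = 1) by (apply Rinv_r; lra).
    assert (0 < / Y) by (apply Rinv_0_lt_compat; lra).
    assert (X <= 10 * Y) by lra.
    assert (X * / Y <= 10) by nra.
    nra. }
  assert (TL : forall j, (ps b (K0 + j + 1) - ps b (K0 + 1)) / 4 <= ps a (m (K0 + j)%nat) - ps a (m K0)).
  { induction j.
    - rewrite Nat.add_0_r. lra.
    - replace (K0 + S j + 1)%nat with (S (K0 + j + 1)) by lia.
      replace (K0 + S j)%nat with (S (K0 + j)) by lia.
      simpl ps at 1. 
      assert (B1 := BL (K0 + j)%nat ltac:(lia)).
      destruct (Hb (K0 + j + 1)%nat ltac:(lia)) as [B2 _].
      replace (K0 + j + 1)%nat with (S (K0 + j)) in B2, IHj |- * by lia.
      rewrite B2. lra. }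
  assert (TU : forall j, ps a (m (K0 + j)%nat) - ps a (m K0) <= 18 * (ps b (K0 + j) - ps b K0)).
  { induction j.
    - rewrite Nat.add_0_r. lra.
    - replace (K0 + S j)%nat with (S (K0 + j)) by lia.
      simpl ps at 3.
      assert (B1 := BU (K0 + j)%nat ltac:(lia)).
      destruct (Hb (K0 + j)%nat ltac:(lia)) as [B2 _].
      rewrite B2. lra. }
  rewrite (series_crit a (ex_intro _ (m K0) Ha)).
  rewrite (series_crit b (ex_intro _ K0 (fun k Hk => eq_ind_r (fun z => 0 <= z) (proj2 (Hb k Hk)) (proj1 (Hb k Hk))))).
  split.
  - intros [N1 [B HB]].
    exists (S (Nat.max K0 N1)), (ps b (K0 + 1) + 4 * (B - ps a (m K0))).
    intros N HN. 
    assert (E : N = (K0 + (N - 1 - K0) + 1)%nat) by lia.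
    specialize (TL (N - 1 - K0)%nat). rewrite <- E in TL.
    assert (HmK := Hmk (K0 + (N - 1 - K0))%nat ltac:(lia)).
    specialize (HB (m (K0 + (N - 1 - K0))%nat) ltac:(lia)). lra.
  - intros [N1 [B HB]].
    exists (m K0), (ps a (m K0) + 18 * (B - ps b K0)).
    intros N HN.
    set (j := Nat.max N1 N).
    assert (HmK := Hmk (K0 + j)%nat ltac:(lia)).
    assert (Mo : ps a N <= ps a (m (K0 + j)%nat)).
    { apply ps_mono; [unfold j in *; lia|]. intros n Hn. apply Ha. lia. }
    specialize (TU j). specialize (HB (K0 + j)%nat ltac:(unfold j; lia)). lra.
Qed.

Theorem lemma4p1 :
  (* psi determines r *)
  (forall (t0 : R) (psi : R -> R),
     0 < t0 -> psi_adm t0 psi ->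
     let s0 := / 2 * ln t0 - / 2 * ln (psi t0) in
     exists r : R -> R,
       r_adm s0 r /\ corresp psi r s0 /\
       (forall r' : R -> R, r_adm s0 r' -> corresp psi r' s0 ->
          forall s, s0 <= s -> r' s = r s)) /\
  (* r determines psi *)
  (forall (s0 : R) (r : R -> R),
     r_adm s0 r ->
     let t0 := exp (s0 - r s0) in
     exists psi : R -> R,
       psi_adm t0 psi /\ corresp psi r s0 /\
       (forall psi' : R -> R, psi_adm t0 psi' -> corresp psi' r s0 ->
          forall t, t0 <= t -> psi' t = psi t)) /\
  (* for corresponding psi and r: limits and series *)
  (forall (t0 s0 : R) (psi r : R -> R),
     0 < t0 -> psi_adm t0 psi -> r_adm s0 r ->
     s0 = / 2 * ln t0 - / 2 * ln (psi t0) ->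
     t0 = exp (s0 - r s0) ->
     corresp psi r s0 ->
     (is_lim (fun t => t * psi t) p_infty 1 <-> is_lim r p_infty 0) /\
     (is_lim (fun t => t * psi t) p_infty 1 ->
        (~ ex_series (psi_term psi) <-> ~ ex_series (r_term r)))).
Proof.
  split; [exact part1|]. split; [exact part2|].
  intros t0 s0 psi r Ht0 Hpsi Hr _ Ht0e Hc.
  assert (L := lim_equiv t0 s0 psi r Ht0 Hpsi Hr Ht0e Hc).
  split; [exact L|].
  intros H. apply L in H.
  assert (E := series_equiv t0 s0 psi r Ht0 Hpsi Hr Ht0e Hc H).
  tauto.
Qed.
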